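(* For every integer $n\ge 4$, $\mathrm{mob}(L(K_n))=n-2$.
   Context: $L(K_n)$ is the line graph of the complete graph $K_n$: its vertices are the edges of $K_n$, two being adjacent iff they share an endpoint. A set $S$ of vertices is a general position set if no three distinct vertices of $S$ lie on a common shortest path. Place one robot on each vertex of a general position set $S$; robots move one at a time, and a move is legal if a robot moves to an adjacent unoccupied vertex and the new set of occupied vertices is again a general position set. $S$ is a mobile general position set if some finite sequence of legal moves results in every vertex being occupied by some robot at some moment. $\mathrm{mob}$ of a graph is the maximum cardinality of a mobile general position set of it. *)

(* Defs.v *)
From mathcomp Require Import all_boot.
Set Implicit Arguments. Unset Strict Implicit. Unset Printing Implicit Defensive.

(* [p] (read as the walk x :: p) is a shortest path from x to [last x p]:
   it is an e-walk and no e-walk from x to the same endpoint is shorter. *)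
Definition shortest_path (T : finType) (e : rel T) (x : T) (p : seq T) : Prop :=
  path e x p /\
  forall q : seq T, path e x q -> last x q = last x p -> size p <= size q.

Definition on_common_geodesic (T : finType) (e : rel T) (u v w : T) : Prop :=
  exists (x : T) (p : seq T),
    shortest_path e x p /\ u \in x :: p /\ v \in x :: p /\ w \in x :: p.

Definition gp_set (T : finType) (e : rel T) (S : {set T}) : Prop :=
  forall u v w : T, u \in S -> v \in S -> w \in S ->
    u != v -> v != w -> u != w -> ~ on_common_geodesic e u v w.

Definition legal_move (T : finType) (e : rel T) (S S' : {set T}) : Prop :=
  exists u v : T, [/\ u \in S, v \notin S, e u v,
                      S' = v |: (S :\ u) & gp_set e S'].

Fixpoint legal_seq (T : finType) (e : rel T) (S : {set T}) (s : seq {set T})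
  : Prop :=
  match s with
  | [::] => True
  | S' :: s' => legal_move e S S' /\ legal_seq e S' s'
  end.

Definition mobile_gp_set (T : finType) (e : rel T) (S : {set T}) : Prop :=
  gp_set e S /\
  exists s : seq {set T}, legal_seq e S s /\
    forall x : T, exists2 C, C \in S :: s & x \in C.

Definition mob_eq (T : finType) (e : rel T) (k : nat) : Prop :=
  (exists S : {set T}, mobile_gp_set e S /\ #|S| = k) /\
  (forall S : {set T}, mobile_gp_set e S -> #|S| <= k).

(* The line graph L(K_n): vertices are the 2-element subsets of 'I_n
   (edges of K_n), adjacent iff distinct and sharing an endpoint. *)
Definition LKn_vertex (n : nat) := {A : {set 'I_n} | #|A| == 2}.

Definition LKn_adj (n : nat) : rel (LKn_vertex n) :=
  fun A B => (val A != val B) && (val A :&: val B != set0).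

(* Main.v *)
Require Import Defs.
From mathcomp Require Import all_boot zify.
Set Implicit Arguments. Unset Strict Implicit. Unset Printing Implicit Defensive.

Lemma vP n (e : LKn_vertex n) : #|val e| = 2.
Proof. by apply/eqP; exact: (valP e). Qed.

Lemma card2_split n (A : {set 'I_n}) a :
  #|A| = 2 -> a \in A -> exists2 x, x != a & A = [set a; x].
Proof.
move=> HA aA.
have : #|A :\ a| == 1 by move: HA; rewrite (cardsD1 a A) aA add1n => -[->].
case/cards1P=> x Hx.
have xA : x \in A :\ a by rewrite Hx set11.
exists x; first by move: xA; rewrite !inE => /andP[].
by rewrite -Hx setD1K.
Qed.

Lemma meet2 n (a b c d : 'I_n) :
  ([set a; b] :&: [set c; d] != set0) = [|| a == c, a == d, b == c | b == d].
Proof.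
apply/idP/idP.
  case/set0Pn=> x; rewrite !inE => /andP[/orP[]/eqP-> /orP[]/eqP->];
  by rewrite ?eqxx ?orbT.
move=> H; apply/set0Pn; case/or4P: H => /eqP->;
  [exists c|exists d|exists c|exists d]; by rewrite !inE ?eqxx ?orbT.
Qed.

Lemma pair_card n (a b : 'I_n) : a != b -> #|[set a; b]| == 2.
Proof. by move=> H; rewrite cards2 H. Qed.

Definition mkpair n (a b : 'I_n) (H : a != b) : LKn_vertex n :=
  exist _ [set a; b] (pair_card H).

Lemma val_mkpair n (a b : 'I_n) (H : a != b) : val (mkpair H) = [set a; b].
Proof. by []. Qed.

Lemma neq_wit n (A B : {set 'I_n}) x : x \in A -> x \notin B -> A != B.
Proof. by move=> xA xB; apply/eqP=> E; move: xB; rewrite -E xA. Qed.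

Lemma vinj n (e1 e2 : LKn_vertex n) : val e1 = val e2 -> e1 = e2.
Proof. exact: val_inj. Qed.

Lemma vex n (e : LKn_vertex n) : exists a b, [/\ a != b & val e = [set a; b]].
Proof. by case/cards2P: (valP e) => a [b [ab ->]]; exists a, b. Qed.

Lemma vne0 n (e : LKn_vertex n) : val e != set0.
Proof. by apply/eqP=> E; have := vP e; rewrite E cards0. Qed.

Lemma adj_neq n (e1 e2 : LKn_vertex n) : LKn_adj e1 e2 -> e1 != e2.
Proof. by case/andP=> H _; apply/eqP=> E; rewrite E eqxx in H. Qed.

Lemma adj_sym n (e1 e2 : LKn_vertex n) : LKn_adj e1 e2 = LKn_adj e2 e1.
Proof. by rewrite /LKn_adj eq_sym setIC. Qed.

Lemma P4_notgp n (S : {set LKn_vertex n}) e1 e2 e3 :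
  gp_set (@LKn_adj n) S -> e1 \in S -> e2 \in S -> e3 \in S ->
  LKn_adj e1 e2 -> LKn_adj e2 e3 -> val e1 :&: val e3 = set0 -> False.
Proof.
move=> gp H1 H2 H3 a12 a23 d13.
have n13 : e1 != e3.
  by apply/eqP=> E; rewrite E setIid in d13; move: (vne0 e3); rewrite d13 eqxx.
apply: (gp e1 e2 e3 H1 H2 H3 (adj_neq a12) (adj_neq a23) n13).
exists e1, [:: e2; e3]; split; last by rewrite !inE !eqxx ?orbT.
split; first by rewrite /= a12 a23.
case=> [|z [|z' q]] //=.
  by move=> _ E; rewrite E eqxx in n13.
move=> /andP[a _] E; rewrite E in a.
by move: a => /andP[_]; rewrite d13 eqxx.
Qed.

Lemma P4pts n (S : {set LKn_vertex n}) e1 e2 e3 (x a c b : 'I_n) :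
  gp_set (@LKn_adj n) S -> e1 \in S -> e2 \in S -> e3 \in S ->
  val e1 = [set x; a] -> val e2 = [set a; c] -> val e3 = [set c; b] ->
  [&& x != a, x != c, x != b, a != c, a != b & c != b] -> False.
Proof.
move=> gp H1 H2 H3 v1 v2 v3 /and4P[xa xc xb /and3P[ac ab cb]].
apply: (P4_notgp gp H1 H2 H3).
- rewrite /LKn_adj v1 v2 meet2 eqxx ?orbT ?andbT.
  by apply: (@neq_wit _ _ _ x); rewrite !inE ?eqxx // negb_or xa.
- rewrite /LKn_adj v2 v3 meet2 eqxx ?orbT ?andbT.
  by apply: (@neq_wit _ _ _ a); rewrite !inE ?eqxx // negb_or ac.
apply/eqP; rewrite v1 v3; apply/negPn; rewrite meet2.
by rewrite negb_or !negb_or xc xb ac ab.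
Qed.

Lemma disj_of_nadj n (x z : LKn_vertex n) :
  x != z -> ~~ LKn_adj x z -> val x :&: val z = set0.
Proof.
move=> nxz /nandP [/negPn/eqP/val_inj E | /negPn/eqP //].
by rewrite E eqxx in nxz.
Qed.

Lemma geo_struct n (u v w : LKn_vertex n) :
  on_common_geodesic (@LKn_adj n) u v w -> u != v -> v != w -> u != w ->
  exists y0 y1 y2, [/\ [&& y0 \in [:: u; v; w], y1 \in [:: u; v; w] &
    y2 \in [:: u; v; w]], LKn_adj y0 y1, LKn_adj y1 y2 &
    val y0 :&: val y2 = set0].
Proof.
case=> x [p [[pth min] [uI [vI wI]]]] uv vw uw.
have sz : size p <= 2.
  set z := last x p.
  case: (eqVneq x z) => [xz | nxz].
    by have := min [::] isT; rewrite /= -/z -xz => /(_ erefl) /leq_trans; apply.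
  case az: (LKn_adj x z).
    by have := min [:: z]; rewrite /= az => /(_ isT erefl) /leq_trans; apply.
  have d := disj_of_nadj nxz (negbT az).
  case/set0Pn: (vne0 x) => a ax; case/set0Pn: (vne0 z) => b bz.
  have ab : a != b.
    by apply/eqP=> E; move/setP: d => /(_ a); rewrite !inE ax E bz.
  have ny : b \notin val x.
    by apply/negP=> bx; move/setP: d => /(_ b); rewrite !inE bx bz.
  have nz : a \notin val z.
    by apply/negP=> az'; move/setP: d => /(_ a); rewrite !inE ax az'.
  have := min [:: mkpair ab; z]; rewrite /= => /(_ _ erefl); apply; last first.
  apply/and3P; split => //.
    rewrite /LKn_adj val_mkpair; apply/andP; split.
      by rewrite eq_sym; apply: (@neq_wit _ _ _ b); rewrite ?inE ?eqxx ?orbT.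
    by apply/set0Pn; exists a; rewrite !inE ax eqxx.
  rewrite /LKn_adj val_mkpair; apply/andP; split.
    by apply: (@neq_wit _ _ _ a); rewrite ?inE ?eqxx ?orbT.
  by apply/set0Pn; exists b; rewrite !inE bz eqxx orbT.
have sub : {subset [:: u; v; w] <= x :: p}.
  by move=> t; rewrite !inE => /or3P[]/eqP->.
have uq : uniq [:: u; v; w] by rewrite /= !inE negb_or uv uw vw.
have [szeq eqi] := uniq_min_size uq sub sz.
have uq2 := uniq_size_uniq uq eqi; rewrite -szeq eqxx in uq2.
clear uI vI wI sub.
case: p pth min sz szeq eqi uq2 => [|p1 [|p2 [|p3 p]]] //= pth min _ _ eqi uq2.
move: pth => /and3P[a1 a2 _].
have d : val x :&: val p2 = set0.
  apply: disj_of_nadj.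
    by apply/eqP=> E; move: uq2; rewrite E !inE eqxx orbT.
  apply/negP=> a; have := min [:: p2]; rewrite /= a => /(_ isT erefl).
  by [].
exists x, p1, p2; split => //; by rewrite !eqi !inE !eqxx ?orbT.
Qed.

Definition st n (c d : 'I_n) (L : {set 'I_n}) : {set LKn_vertex n} :=
  [set e | [exists x, ((val e == [set c; x]) && (x \in L)) ||
             [&& val e == [set d; x], x \notin L, x != c & x != d]]].

Lemma stP n (c d : 'I_n) (L : {set 'I_n}) (e : LKn_vertex n) :
  reflect ((exists2 x, val e = [set c; x] & x \in L) \/
           (exists x, [/\ val e = [set d; x], x \notin L, x != c & x != d]))
          (e \in st c d L).
Proof.
rewrite inE; apply: (iffP existsP).
  case=> x /orP[/andP[/eqP E xL] | /and4P[/eqP E xL xc xd]].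
    by left; exists x.
  by right; exists x.
case=> [[x E xL] | [x [E xL xc xd]]]; exists x; rewrite E eqxx /=.
  by rewrite xL.
by rewrite xL xc xd orbT.
Qed.

Lemma st_key n (c d : 'I_n) (L : {set 'I_n}) (y0 y1 y2 : LKn_vertex n) l m :
  c != d -> c \notin L -> d \notin L ->
  val y0 = [set c; l] -> l \in L -> val y2 = [set d; m] -> m \notin L ->
  m != c -> y1 \in st c d L -> LKn_adj y0 y1 -> LKn_adj y1 y2 -> False.
Proof.
move=> cd cL dL E0 lL E2 mL mc /stP [[x E1 xL] | [x [E1 xL xc xd]]]
  /andP[_ a01] /andP[_ a12].
  move: a12; rewrite E1 E2 meet2 => /or4P[] /eqP E.
  - by rewrite E eqxx in cd.
  - by rewrite E eqxx in mc.
  - by rewrite -E xL in dL.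
  - by rewrite -E xL in mL.
move: a01; rewrite E1 E0 meet2 => /or4P[] /eqP E.
- by rewrite E eqxx in cd.
- by rewrite -E eqxx in xc.
- by rewrite -E lL in dL.
- by rewrite -E lL in xL.
Qed.

Lemma st_gp n (c d : 'I_n) (L : {set 'I_n}) :
  c != d -> c \notin L -> d \notin L -> gp_set (@LKn_adj n) (st c d L).
Proof.
move=> cd cL dL u v w uS vS wS uv vw uw geo.
have [y0 [y1 [y2 [/and3P[m0 m1 m2] a01 a12 d02]]]] := geo_struct geo uv vw uw.
have inS : forall y, y \in [:: u; v; w] -> y \in st c d L.
  by move=> y; rewrite !in_cons in_nil orbF => /or3P[]/eqP->.
have y0S := inS _ m0; have y1S := inS _ m1; have y2S := inS _ m2.
have nd : forall a b b', val y0 = [set a; b] -> val y2 = [set a; b'] -> False.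
  move=> a b b' E0 E2; move/setP: d02 => /(_ a).
  by rewrite !inE E0 E2 !inE eqxx.
case/stP: y0S => [[l E0 lL] | [m [E0 mL mc md]]];
  case/stP: y2S => [[l' E2 lL'] | [m' [E2 mL' mc' md']]].
- exact: (nd _ _ _ E0 E2).
- exact: (st_key cd cL dL E0 lL E2 mL' mc' y1S a01 a12).
- by rewrite adj_sym in a01; rewrite adj_sym in a12;
    exact: (st_key cd cL dL E2 lL' E0 mL mc y1S a12 a01).
- exact: (nd _ _ _ E0 E2).
Qed.

Definition star n (c m : 'I_n) := st c m (~: [set c; m]).

Lemma in_star n (c m : 'I_n) (e : LKn_vertex n) :
  c != m -> (e \in star c m) = (c \in val e) && (m \notin val e).
Proof.
move=> cm; apply/stP/andP.
  case=> [[x E xL] | [x [E xL xc xd]]].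
    move: xL; rewrite E !inE negb_or eqxx /= => /andP[xc xm].
    by split=> //; rewrite negb_or eq_sym cm eq_sym.
  by move: xL; rewrite !inE => /negPn; rewrite (negbTE xc) (negbTE xd).
case=> ce me; have [x xc E] := card2_split (vP e) ce.
left; exists x => //.
move: me; rewrite E !inE !negb_or xc /= => /andP[_].
by rewrite eq_sym.
Qed.

Lemma st_empty n (c d : 'I_n) : c != d -> st c d set0 = star d c.
Proof.
move=> cd; apply/setP=> e; rewrite in_star 1?eq_sym //.
apply/stP/andP.
  case=> [[x E] | [x [E _ xc xd]]]; first by rewrite inE.
  rewrite E !inE eqxx; split=> //.
  by rewrite negb_or cd /= eq_sym.
case=> de ce; have [x xd E] := card2_split (vP e) de.
right; exists x; split=> //; first by rewrite inE.
by move: ce; rewrite E !inE negb_or => /andP[_]; rewrite eq_sym.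
Qed.

Lemma star_gp n (c m : 'I_n) : c != m -> gp_set (@LKn_adj n) (star c m).
Proof. by move=> cm; apply: st_gp; rewrite // !inE ?eqxx ?orbT. Qed.

Definition Vis n (S S' : {set LKn_vertex n}) (P : LKn_vertex n -> Prop) :=
  exists s, [/\ legal_seq (@LKn_adj n) S s, last S s = S' &
    forall x, P x -> exists2 C, C \in S :: s & x \in C].

Lemma legal_seq_cat n (S : {set LKn_vertex n}) s1 s2 :
  legal_seq (@LKn_adj n) S s1 -> legal_seq (@LKn_adj n) (last S s1) s2 ->
  legal_seq (@LKn_adj n) S (s1 ++ s2).
Proof.
elim: s1 S => [|S1 s1 IH] S //= [m l] l2; split=> //; exact: IH.
Qed.

Lemma vis_refl n (S : {set LKn_vertex n}) : Vis S S (fun x => x \in S).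
Proof. by exists [::]; split=> // x xS; exists S; rewrite ?inE. Qed.

Lemma vis_move n (S S' : {set LKn_vertex n}) :
  legal_move (@LKn_adj n) S S' -> Vis S S' (fun x => x \in S \/ x \in S').
Proof.
move=> m; exists [:: S']; split=> // x [xS|xS'].
  by exists S; rewrite ?inE ?eqxx.
by exists S'; rewrite ?inE ?eqxx ?orbT.
Qed.

Lemma vis_trans n (S1 S2 S3 : {set LKn_vertex n}) P Q :
  Vis S1 S2 P -> Vis S2 S3 Q -> Vis S1 S3 (fun x => P x \/ Q x).
Proof.
move=> [s1 [l1 e1 c1]] [s2 [l2 e2 c2]]; exists (s1 ++ s2); split.
- by apply: legal_seq_cat => //; rewrite e1.
- by rewrite last_cat e1.
move=> x [/c1 [C CI xC] | /c2 [C CI xC]]; exists C => //.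
  by move: CI; rewrite !in_cons mem_cat => /orP[->|->]; rewrite ?orbT.
move: CI; rewrite in_cons => /orP[/eqP E|Cs2].
  have : S2 \in S1 :: s1 by rewrite -e1 mem_last.
  by rewrite -E !in_cons mem_cat => /orP[->|->] //; rewrite orbT.
by rewrite !in_cons mem_cat Cs2 !orbT.
Qed.

Lemma vis_weak n (S S' : {set LKn_vertex n}) (P Q : LKn_vertex n -> Prop) :
  Vis S S' P -> (forall x, Q x -> P x) -> Vis S S' Q.
Proof. by move=> [s [l e c]] H; exists s; split=> // x /H /c. Qed.

Lemma pair_eq1 n (c y z : 'I_n) :
  y != c -> z != c -> ([set c; y] == [set c; z]) = (y == z).
Proof.
move=> yc zc; apply/eqP/eqP=> [E|->] //.
have : y \in [set c; z] by rewrite -E !inE eqxx orbT.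
by rewrite !inE (negbTE yc) => /eqP.
Qed.

Lemma veq n (e f : LKn_vertex n) : (e == f) = (val e == val f).
Proof. by rewrite val_eqE. Qed.

Lemma rot n (c m m' : 'I_n) : c != m -> c != m' ->
  Vis (star c m) (star c m') (fun x => x \in star c m \/ x \in star c m').
Proof.
move=> cm cm'; case: (eqVneq m m') => [<-|mm'].
  by apply: vis_weak (vis_refl _) _ => x [].
apply: vis_move; exists (mkpair cm'), (mkpair cm); split.
- by rewrite in_star // val_mkpair !inE eqxx /= negb_or (eq_sym m c) cm mm'.
- by rewrite in_star // val_mkpair !inE !eqxx orbT andbF.
- rewrite /LKn_adj !val_mkpair meet2 eqxx andbT.
  by apply: (@neq_wit _ _ _ m'); rewrite !inE ?eqxx ?orbT // negb_or eq_sym cm' eq_sym.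
- apply/setP=> e; rewrite in_setU1 in_setD1 !in_star //.
  case ce: (c \in val e); last first.
    rewrite /= andbF orbF; apply/esym/negbTE/eqP=> E.
    by move: ce; rewrite E val_mkpair !inE eqxx.
  have [y yc E] := card2_split (vP e) ce.
  rewrite !veq !val_mkpair E !pair_eq1 // 1?eq_sym //.
  rewrite !inE /= !negb_or (eq_sym m c) (negbTE cm) (eq_sym m' c) (negbTE cm') /=.
  case: (eqVneq y m) => [->|ym] /=; first by rewrite eq_sym mm'.
  by rewrite andbT eq_sym.
- exact: star_gp.
Qed.

Lemma in_nin n (L : {set 'I_n}) x y : x \in L -> y \notin L -> x != y.
Proof. by move=> xL yL; apply/eqP=> E; rewrite -E xL in yL. Qed.

Lemma swap_step n (c d l : 'I_n) (L : {set 'I_n}) :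
  c != d -> c \notin L -> d \notin L -> l \in L ->
  legal_move (@LKn_adj n) (st c d L) (st c d (L :\ l)).
Proof.
move=> cd cL dL lL.
have cl : c != l by rewrite eq_sym (in_nin lL cL).
have dl : d != l by rewrite eq_sym (in_nin lL dL).
exists (mkpair cl), (mkpair dl); split.
- by apply/stP; left; exists l.
- apply/stP=> -[[x E xL] | [x [E xL xc xd]]].
    have : d \in [set c; x] by rewrite -E val_mkpair !inE eqxx.
    rewrite !inE eq_sym (negbTE cd) /= => /eqP E'.
    by rewrite E' xL in dL.
  move/eqP: E; rewrite val_mkpair pair_eq1 ?(eq_sym l d) // => /eqP E.
  by rewrite -E lL in xL.
- rewrite /LKn_adj !val_mkpair meet2 !eqxx !orbT andbT.
  by apply: (@neq_wit _ _ _ c); rewrite !inE ?eqxx // negb_or cd.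
- apply/setP=> e; rewrite in_setU1 in_setD1; apply/idP/idP.
    case/stP=> [[x E] | [x [E]]]; rewrite in_setD1.
      case/andP=> xl xL; apply/orP; right; apply/andP; split.
        by rewrite veq E val_mkpair pair_eq1 ?(in_nin xL cL) ?(in_nin lL cL).
      by apply/stP; left; exists x.
    rewrite negb_and negbK => xL' xc xd.
    case: (eqVneq x l) => [xl|xl].
      by rewrite veq E val_mkpair xl eqxx.
    apply/orP; right; apply/andP; split.
      rewrite veq E val_mkpair; apply: (@neq_wit _ _ _ d).
        by rewrite !inE eqxx.
      by rewrite !inE negb_or eq_sym cd dl.
    apply/stP; right; exists x; split=> //.
    by move: xL'; rewrite (negbTE xl).
  case/orP=> [/eqP -> | /andP[eu /stP[[x E xL] | [x [E xL xc xd]]]]].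
    apply/stP; right; exists l; split=> //.
    - by rewrite !inE eqxx.
    - by rewrite eq_sym.
    - by rewrite eq_sym.
  apply/stP; left; exists x => //.
  rewrite !inE xL andbT; apply: contra eu => /eqP xl.
  by rewrite veq E val_mkpair xl.
  apply/stP; right; exists x; split=> //.
  by rewrite !inE negb_and negbK xL orbT.
- by apply: st_gp; rewrite // !inE negb_and ?cL ?dL ?orbT.
Qed.

Lemma swap_all n (c d : 'I_n) : c != d -> forall k (L : {set 'I_n}),
  #|L| = k -> c \notin L -> d \notin L ->
  Vis (st c d L) (st c d set0) (fun x => x \in st c d L \/ x \in st c d set0).
Proof.
move=> cd; elim=> [|k IH] L HL cL dL.
  move/eqP: HL; rewrite cards_eq0 => /eqP ->.
  by apply: vis_weak (vis_refl _) _ => x [].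
have : 0 < #|L| by rewrite HL.
case/card_gt0P=> l lL.
have HL' : #|L :\ l| = k by move: HL; rewrite (cardsD1 l L) lL add1n => -[].
have cL' : c \notin L :\ l by rewrite inE negb_and cL orbT.
have dL' : d \notin L :\ l by rewrite inE negb_and dL orbT.
apply: vis_weak (vis_trans (vis_move (swap_step cd cL dL lL)) (IH _ HL' cL' dL')) _.
by move=> x [H|H]; [left; left | right; right].
Qed.

Lemma swap n (c d : 'I_n) : c != d ->
  Vis (star c d) (star d c) (fun x => x \in star c d \/ x \in star d c).
Proof.
move=> cd; rewrite -(st_empty cd) /star.
apply: (@swap_all _ c d cd _ _ erefl); by rewrite !inE ?eqxx ?orbT.
Qed.

Lemma loop n (c0 d0 v m : 'I_n) : c0 != d0 -> v != c0 -> m != v -> m != c0 ->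
  Vis (star c0 d0) (star c0 d0) (fun x => v \in val x).
Proof.
move=> cd vc mv mc.
have cv : c0 != v by rewrite eq_sym.
have vm : v != m by rewrite eq_sym.
have A := vis_trans (rot cd cv) (vis_trans (swap cv)
  (vis_trans (rot vc vm) (vis_trans (rot vm vc)
  (vis_trans (swap vc) (rot cv cd))))).
apply: vis_weak A _ => x vx.
have [y yv E] := card2_split (vP x) vx.
case: (eqVneq y c0) => [yc|yc].
  right; right; left; right; rewrite in_star // E yc !inE eqxx /=.
  by rewrite negb_or mv mc.
right; left; right; rewrite in_star // E !inE eqxx /=.
by rewrite negb_or cv eq_sym.
Qed.

Definition other n (c : 'I_n) (e : LKn_vertex n) := odflt c [pick y in val e :\ c].

Lemma otherP n (c : 'I_n) (e : LKn_vertex n) :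
  c \in val e -> other c e != c /\ val e = [set c; other c e].
Proof.
move=> ce; have [x xc E] := card2_split (vP e) ce.
have H : val e :\ c = [set x] by rewrite E setU1K // inE eq_sym.
suff -> : other c e = x by [].
rewrite /other H; case: pickP => [y /set1P -> //|].
by move/(_ x); rewrite set11.
Qed.

Lemma avoid n (X : {set 'I_n}) : #|X| < n -> exists d, d \notin X.
Proof.
move=> H; have : 0 < #|~: X|.
  by have := cardsC X; rewrite card_ord => E; rewrite -(ltn_add2l #|X|) E addn0.
by case/card_gt0P=> d; rewrite inE => dX; exists d.
Qed.

Lemma card_star n (c d : 'I_n) : c != d -> #|star c d| = n - 2.
Proof.
move=> cd.
have inj : {in star c d &, injective (other c)}.
  move=> e f; rewrite !in_star // => /andP[ce _] /andP[cf _] E.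
  apply: val_inj; rewrite (otherP ce).2 (otherP cf).2 E //.
rewrite -(card_in_imset inj).
have -> : other c @: star c d = ~: [set c; d].
  apply/setP=> y; apply/imsetP/idP.
    case=> e; rewrite in_star // => /andP[ce de] ->.
    have [oc E] := otherP ce.
    rewrite !inE negb_or oc /=; apply: contra de => /eqP <-.
    by rewrite E !inE eqxx orbT.
  rewrite !inE negb_or => /andP[yc yd].
  have cy : c != y by rewrite eq_sym.
  exists (mkpair cy).
    by rewrite in_star // val_mkpair !inE eqxx /= negb_or eq_sym cd eq_sym.
  have cin : c \in val (mkpair cy) by rewrite val_mkpair !inE eqxx.
  have [oc E] := otherP cin.
  by apply/eqP; move: E; rewrite val_mkpair => /eqP; rewrite pair_eq1.
have := cardsC [set c; d]; rewrite cards2 cd card_ord => E.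
by rewrite -[X in _ = X - 2]E /= addKn.
Qed.

Lemma lower n : 4 <= n ->
  exists S : {set LKn_vertex n}, mobile_gp_set (@LKn_adj n) S /\ #|S| = n - 2.
Proof.
move=> n4.
have h0 : 0 < n by apply: leq_trans n4.
have h1 : 1 < n by apply: leq_trans n4.
pose c0 := Ordinal h0; pose d0 := Ordinal h1.
have cd : c0 != d0 by [].
exists (star c0 d0); split; last exact: card_star.
split; first exact: star_gp.
have L : forall l : seq 'I_n, Vis (star c0 d0) (star c0 d0)
    (fun x => exists2 v, v \in l & (v != c0) && (v \in val x)).
  elim=> [|v l IH].
    by apply: vis_weak (vis_refl _) _ => x [].
  case: (eqVneq v c0) => [vc|vc].
    apply: vis_weak IH _ => x [w]; rewrite inE => /orP[/eqP->|wl H].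
      by rewrite vc eqxx.
    by exists w.
  have [m mX] : exists m, m \notin [set v; c0].
    by apply: avoid; rewrite cards2; case: (v != c0); apply: leq_trans n4.
  move: mX; rewrite !inE negb_or => /andP[mv mc].
  apply: vis_weak (vis_trans (loop cd vc mv mc) IH) _ => x [w].
  rewrite inE => /orP[/eqP->|wl H]; first by case/andP=> _ H; left.
  by right; exists w.
have [s [ls _ cov]] := L (enum 'I_n).
exists s; split=> // x; apply: cov.
have [a [b [ab E]]] := vex x.
case: (eqVneq a c0) => [ac|ac].
  exists b; first by rewrite mem_enum.
  by rewrite E !inE eqxx orbT andbT -ac eq_sym.
by exists a; rewrite ?mem_enum // E !inE eqxx ac.
Qed.

Lemma card3 n (a b c : 'I_n) : #|[set a; b; c]| <= 3.
Proof.
apply: leq_trans (leq_card_setU _ _) _.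
by rewrite cards2 cards1; case: (a != b).
Qed.

Definition has2 n (S : {set LKn_vertex n}) (a b : 'I_n) :=
  [exists e in S, val e == [set a; b]].

Lemma has2P n (S : {set LKn_vertex n}) a b :
  reflect (exists2 e, e \in S & val e = [set a; b]) (has2 S a b).
Proof.
apply: (iffP existsP) => [[e /andP[eS /eqP E]]|[e eS E]]; exists e => //.
by rewrite eS E eqxx.
Qed.

Lemma has2C n (S : {set LKn_vertex n}) a b : has2 S a b = has2 S b a.
Proof. by rewrite /has2 setUC. Qed.

Lemma legal_seq_gp n (S : {set LKn_vertex n}) s :
  legal_seq (@LKn_adj n) S s -> gp_set (@LKn_adj n) S ->
  forall C, C \in S :: s -> gp_set (@LKn_adj n) C.
Proof.
elim: s S => [|S1 s IH] S /=.
  by move=> _ g C; rewrite inE => /eqP->.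
move=> [[u [v [_ _ _ _ g1]]] l] g C; rewrite in_cons => /orP[/eqP->//|Cs].
by apply: (IH S1) => //; rewrite in_cons Cs orbT.
Qed.

Lemma edge_sub n (S S' : {set LKn_vertex n}) (u v : LKn_vertex n) (a b c : 'I_n) :
  gp_set (@LKn_adj n) S' -> S' = v |: (S :\ u) -> u \in S -> v \notin S ->
  val u = [set a; b] -> a \in val v -> has2 S a c -> has2 S b c ->
  [&& a != b, b != c & a != c] -> False.
Proof.
move=> g E uS vS Eu av /has2P[f fS Ef] /has2P[h hS Eh] /and3P[ab bc ac].
have [x xa Ev] := card2_split (vP v) av.
have xb : x != b.
  apply: contra vS => /eqP xb; suff -> : v = u by [].
  by apply: val_inj; rewrite Ev Eu xb.
have xc : x != c.
  apply: contra vS => /eqP xc; suff -> : v = f by [].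
  by apply: val_inj; rewrite Ev Ef xc.
have fu : f != u.
  rewrite veq Ef Eu; apply: (@neq_wit _ _ _ c); first by rewrite !inE eqxx orbT.
  by rewrite !inE negb_or eq_sym ac eq_sym.
have hu : h != u.
  rewrite veq Eh Eu; apply: (@neq_wit _ _ _ c); first by rewrite !inE eqxx orbT.
  by rewrite !inE negb_or eq_sym ac eq_sym.
apply: (@P4pts _ S' v f h x a c b g).
- by rewrite E setU11.
- by rewrite E !inE fu fS orbT.
- by rewrite E !inE hu hS orbT.
- by rewrite Ev setUC.
- exact: Ef.
- by rewrite Eh setUC.
by rewrite xa xc xb ac ab eq_sym bc.
Qed.

Lemma edge_stays n (S S' : {set LKn_vertex n}) (a b c : 'I_n) :
  legal_move (@LKn_adj n) S S' -> has2 S a b -> has2 S b c -> has2 S a c ->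
  [&& a != b, b != c & a != c] -> has2 S' a b.
Proof.
move=> [u [v [uS vS auv E g]]] /has2P[e eS Ee] hbc hac dis.
case: (eqVneq e u) => [eu|eu]; last first.
  by apply/has2P; exists e => //; rewrite E !inE eu eS orbT.
exfalso; move: auv => /andP[_]; rewrite -eu Ee.
case/set0Pn=> z; rewrite !inE => /andP[/orP[]/eqP-> zv].
  by apply: (edge_sub g E uS vS _ zv hac hbc dis); rewrite -eu.
apply: (edge_sub g E uS vS _ zv hbc hac).
  by rewrite -eu Ee setUC.
by case/and3P: dis => ab bc ac; rewrite eq_sym ab ac bc.
Qed.

Definition tri n (S : {set LKn_vertex n}) (a b c : 'I_n) :=
  [&& has2 S a b, has2 S b c & has2 S a c].

Lemma tri_move n (S S' : {set LKn_vertex n}) (a b c : 'I_n) :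
  legal_move (@LKn_adj n) S S' -> [&& a != b, b != c & a != c] ->
  tri S a b c -> tri S' a b c.
Proof.
move=> m dis /and3P[hab hbc hac]; case/and3P: (dis) => ab bc ac.
apply/and3P; split.
- exact: (edge_stays m hab hbc hac dis).
- apply: (@edge_stays _ S S' b c a m hbc); [by rewrite has2C | by rewrite has2C |].
  by rewrite bc eq_sym ac eq_sym ab.
- apply: (@edge_stays _ S S' a c b m hac); [by rewrite has2C | by [] |].
  by rewrite ac eq_sym bc ab.
Qed.

Lemma tri_seq n (S : {set LKn_vertex n}) s (a b c : 'I_n) :
  legal_seq (@LKn_adj n) S s -> [&& a != b, b != c & a != c] ->
  tri S a b c -> forall C, C \in S :: s -> tri C a b c.
Proof.
elim: s S => [|S1 s IH] S /=.
  by move=> _ _ t C; rewrite inE => /eqP->.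
move=> [m l] dis t C; rewrite in_cons => /orP[/eqP->//|Cs].
apply: (IH S1 l dis (tri_move m dis t)).
exact: Cs.
Qed.

Lemma caseA n (S : {set LKn_vertex n}) (a b c : 'I_n) : 4 <= n ->
  mobile_gp_set (@LKn_adj n) S -> [&& a != b, b != c & a != c] ->
  tri S a b c -> False.
Proof.
move=> n4 [g [s [ls cov]]] dis t.
have [d dX] : exists d, d \notin [set a; b; c].
  by apply: avoid; apply: leq_ltn_trans (card3 a b c) _.
move: dX; rewrite !inE !negb_or => /andP[/andP[da db] dc].
have ad : a != d by rewrite eq_sym.
have [C CI wC] := cov (mkpair ad).
have gC := legal_seq_gp ls g CI.
case/and3P: (tri_seq ls dis t CI) => /has2P[e1 e1C E1] /has2P[e2 e2C E2] _.
apply: (P4pts gC wC e1C e2C _ E1 E2).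
  by rewrite val_mkpair setUC.
by case/and3P: dis => ab bc ac; rewrite da db dc ab ac bc.
Qed.

Definition deg n (S : {set LKn_vertex n}) (v : 'I_n) :=
  #|[set e in S | v \in val e]|.

Lemma dcount n (S : {set LKn_vertex n}) (A : {set 'I_n}) :
  \sum_(e in S) #|val e :&: A| = \sum_(v in A) deg S v.
Proof.
have E1 : forall e : LKn_vertex n,
    #|val e :&: A| = \sum_(v in A) ((v \in val e) : nat).
  move=> e; rewrite -sum1_card big_mkcond [RHS]big_mkcond /=.
  by apply: eq_bigr => v _; rewrite inE; case: (v \in val e); case: (v \in A).
have E2 : forall v, deg S v = \sum_(e in S) ((v \in val e) : nat).
  move=> v; rewrite /deg -sum1_card big_mkcond [RHS]big_mkcond /=.
  by apply: eq_bigr => e _; rewrite inE; case: (e \in S); case: (v \in val e).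
rewrite (eq_bigr _ (fun e _ => E1 e)) (eq_bigr _ (fun v _ => E2 v)).
exact: exchange_big.
Qed.

Lemma second_edge n (S : {set LKn_vertex n}) e u :
  e \in S -> u \in val e -> 1 < deg S u ->
  exists e', [/\ e' \in S, e' != e & u \in val e'].
Proof.
move=> eS ue; rewrite /deg (cardsD1 e) inE eS ue /= add1n ltnS.
by case/card_gt0P=> f; rewrite !inE => /and3P[fe fS uf]; exists f.
Qed.

Lemma deg_gt0 n (S : {set LKn_vertex n}) e u :
  e \in S -> u \in val e -> 0 < deg S u.
Proof. by move=> eS ue; apply/card_gt0P; exists e; rewrite inE eS ue. Qed.

Definition notri n (S : {set LKn_vertex n}) :=
  forall a b c : 'I_n, [&& a != b, b != c & a != c] -> ~~ tri S a b c.

Lemma leaf_end n (S : {set LKn_vertex n}) e :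
  gp_set (@LKn_adj n) S -> notri S -> e \in S ->
  exists2 v, v \in val e & deg S v == 1.
Proof.
move=> g nt eS.
have [a [b [ab E]]] := vex e.
have ae : a \in val e by rewrite E !inE eqxx.
have be : b \in val e by rewrite E !inE eqxx orbT.
case da: (deg S a == 1); first by exists a.
case db: (deg S b == 1); first by exists b.
have da2 : 1 < deg S a by rewrite ltn_neqAle eq_sym da (deg_gt0 eS ae).
have db2 : 1 < deg S b by rewrite ltn_neqAle eq_sym db (deg_gt0 eS be).
have [e1 [e1S e1e ae1]] := second_edge eS ae da2.
have [e2 [e2S e2e be2]] := second_edge eS be db2.
have [x xa E1] := card2_split (vP e1) ae1.
have [y yb E2] := card2_split (vP e2) be2.
have xb : x != b.
  by apply: contra e1e => /eqP xb; rewrite veq E1 E xb.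
have ya : y != a.
  by apply: contra e2e => /eqP ya; rewrite veq E2 E ya setUC.
exfalso; case: (eqVneq x y) => [xy|xy].
  have dis : [&& a != b, b != x & a != x] by rewrite ab (eq_sym b) xb (eq_sym a) xa.
  move/negP: (nt _ _ _ dis); apply.
  apply/and3P; split; apply/has2P.
  - by exists e.
  - by exists e2; rewrite // xy.
  - by exists e1.
apply: (P4pts g e1S eS e2S _ E E2).
  by rewrite E1 setUC.
by rewrite xa xb xy ab eq_sym ya eq_sym yb.
Qed.

Lemma center n (S : {set LKn_vertex n}) : 4 <= n ->
  gp_set (@LKn_adj n) S -> notri S -> n - 2 < #|S| ->
  exists c, n - 1 <= deg S c.
Proof.
move=> n4 g nt big.
pose Lf := [set v | deg S v == 1].
have sL : \sum_(v in Lf) deg S v = #|Lf|.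
  rewrite -sum1_card; apply: eq_bigr => v; rewrite inE => /eqP //.
have h1 : #|S| <= #|Lf|.
  rewrite -sL -dcount -sum1_card; apply: leq_sum => e eS.
  have [v ve vL] := leaf_end g nt eS.
  by apply/card_gt0P; exists v; rewrite !inE ve vL.
have h2 : \sum_(v in [set: 'I_n]) deg S v = #|S| * 2.
  rewrite -dcount -sum_nat_const; apply: eq_bigr => e _.
  by rewrite setIT vP.
have h3 : #|Lf| + \sum_(v in ~: Lf) deg S v = #|S| * 2.
  by rewrite -h2 [RHS](big_setID Lf) setTI setTD sL.
clear h2; rename h3 into h2.
have hC := cardsC Lf; rewrite card_ord in hC.
case: (eqVneq #|~: Lf| 0) => [H0|H0].
  move: h2; rewrite (_ : ~: Lf = set0) ?big_set0; last by apply/eqP; rewrite -cards_eq0 H0.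
  by rewrite addn0 => h2; exfalso; clearbody Lf; lia.
have H1 : #|~: Lf| == 1.
  by move: H0; rewrite -lt0n => H0; apply/eqP; clearbody Lf; lia.
move/eqP: (H1) => H1e; case/cards1P: H1 => c Ec; exists c.
by move: h2; rewrite Ec big_set1 => h2; clearbody Lf; lia.
Qed.

Lemma cardC2 n (c x : 'I_n) : c != x -> #|~: [set c; x]| = n - 2.
Proof.
move=> cx; have := cardsC [set c; x]; rewrite cards2 cx card_ord => E.
by rewrite -[X in _ = X - 2]E /= addKn.
Qed.

Lemma full_star n (S : {set LKn_vertex n}) (c : 'I_n) : 2 <= n ->
  n - 1 <= deg S c -> forall x, x != c -> has2 S c x.
Proof.
move=> n2 dc x xc; case hn: (has2 S c x) => //; exfalso.
pose Ec := [set e in S | c \in val e].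
have inj : {in Ec &, injective (other c)}.
  move=> e f; rewrite !inE => /andP[_ ce] /andP[_ cf] E.
  apply: val_inj; rewrite (otherP ce).2 (otherP cf).2 E //.
have sub : other c @: Ec \subset ~: [set c; x].
  apply/subsetP=> y /imsetP[e]; rewrite inE => /andP[eS ce] ->.
  have [oc E] := otherP ce.
  rewrite !inE negb_or oc /=; apply/eqP=> ox.
  have : has2 S c x by apply/has2P; exists e; rewrite // E ox.
  by rewrite hn.
have := subset_leq_card sub; rewrite (card_in_imset inj) cardC2 1?eq_sym //.
move: dc; rewrite /deg -/Ec => dc le; move: (leq_trans dc le).
by rewrite leqNgt; case/negP; rewrite ltn_sub2l.
Qed.

Lemma all_c n (S : {set LKn_vertex n}) (c : 'I_n) :
  notri S -> (forall x, x != c -> has2 S c x) ->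
  forall e, e \in S -> c \in val e.
Proof.
move=> nt fs e eS; apply/negPn/negP => ce.
have [a [b [ab E]]] := vex e.
move: ce; rewrite E !inE negb_or => /andP[ca cb].
have dis : [&& c != a, a != b & c != b] by rewrite ca ab cb.
move/negP: (nt _ _ _ dis); apply; apply/and3P; split.
- by apply: fs; rewrite eq_sym.
- by apply/has2P; exists e.
- by apply: fs; rewrite eq_sym.
Qed.

Lemma star_stuck n (S S' : {set LKn_vertex n}) (c : 'I_n) : 4 <= n ->
  notri S -> (forall x, x != c -> has2 S c x) ->
  legal_move (@LKn_adj n) S S' -> False.
Proof.
move=> n4 nt fs [u [v [uS vS auv E g']]].
have [lc Eu] := otherP (all_c nt fs uS); set l := other c u in lc Eu.
have cv : c \notin val v.
  apply/negP=> cv; have [x xc Ev] := card2_split (vP v) cv.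
  case/has2P: (fs x xc) => f fS Ef.
  by move: vS; rewrite (_ : v = f) ?fS //; apply: val_inj; rewrite Ev Ef.
have lv : l \in val v.
  case/andP: auv => _ /set0Pn [z]; rewrite Eu !inE => /andP[/orP[]/eqP-> zv] //.
  by rewrite zv in cv.
have [x xl Ev] := card2_split (vP v) lv.
have xc : x != c by apply: contra cv => /eqP <-; rewrite Ev !inE eqxx orbT.
have [y yX] : exists y, y \notin [set c; l; x].
  by apply: avoid; apply: leq_ltn_trans (card3 c l x) _.
move: yX; rewrite !inE !negb_or => /andP[/andP[yc yl] yx].
case/has2P: (fs x xc) => f1 f1S E1.
case/has2P: (fs y yc) => f2 f2S E2.
have f1u : f1 != u by rewrite veq E1 Eu pair_eq1.
have f2u : f2 != u by rewrite veq E2 Eu pair_eq1.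
apply: (@P4pts _ S' v f1 f2 l x c y g').
- by rewrite E setU11.
- by rewrite E !inE f1u f1S orbT.
- by rewrite E !inE f2u f2S orbT.
- exact: Ev.
- by rewrite E1 setUC.
- exact: E2.
by rewrite eq_sym xl lc eq_sym yl xc eq_sym yx eq_sym yc.
Qed.

Lemma caseB n (S : {set LKn_vertex n}) : 4 <= n ->
  mobile_gp_set (@LKn_adj n) S -> notri S -> n - 2 < #|S| -> False.
Proof.
move=> n4 [g [s [ls cov]]] nt big.
have [c dc] := center n4 g nt big.
have fs := full_star (leq_trans (isT : 2 <= 4) n4) dc.
case: s ls cov => [|S' s] /=; last by case=> m _ _; exact: (star_stuck n4 nt fs m).
move=> _ cov.
have [a aX] : exists a, a \notin [set c].
  by apply: avoid; rewrite cards1; apply: leq_trans n4.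
have [b bX] : exists b, b \notin [set c; a].
  by apply: avoid; rewrite cards2; case: (c != a); apply: leq_trans n4.
move: aX bX; rewrite !inE negb_or => ac /andP[bc ba].
have ab : a != b by rewrite eq_sym.
have [C] := cov (mkpair ab); rewrite inE => /eqP -> wS.
have := all_c nt fs wS; rewrite val_mkpair !inE.
by rewrite eq_sym (negbTE ac) eq_sym (negbTE bc).
Qed.

Theorem theorem3p2 (n : nat) : 4 <= n -> mob_eq (@LKn_adj n) (n - 2).
Proof.
move=> n4; split; first exact: lower.
move=> S mob; rewrite leqNgt; apply/negP => big.
case: (boolP [exists a, exists b, exists c,
               [&& a != b, b != c & a != c] && tri S a b c]).
  case/existsP=> a /existsP[b /existsP[c /andP[dis t]]].
  exact: (caseA n4 mob dis t).
move=> H; apply: (caseB n4 mob _ big) => a b c dis; apply/negP => t.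
by move/negP: H; apply; apply/existsP; exists a; apply/existsP; exists b;
  apply/existsP; exists c; rewrite dis t.
Qed.
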